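(* Let $S=\langle P,\varphi\rangle$ be a SUT model, $t$ a strength, $N\ge1$ an integer and $lb$ an integer with $0\le lb<CAN(t,S)$ and $lb+1\le N$. Let $m=N-(lb+1)$ be the number of variables $u_i$, and consider the Weighted Partial MaxSAT instance $\Phi$ defined in the context. If $N\ge CAN(t,S)$, the optimal cost of $\Phi$ is $CAN(t,S)-(lb+1)+(|\mathcal T_a|-T(N;t,S))\cdot(m+1)$; otherwise it is $N-(lb+1)+(|\mathcal T_a|-T(N;t,S))\cdot(m+1)$.
   Context: A SUT model is $S=\langle P,\varphi\rangle$, where $P$ is a finite set of parameters, each $p\in P$ having a finite nonempty domain $d(p)$, and $\varphi$ is a propositional formula whose atoms have the form $(p=v)$ with $p\in P$, $v\in d(p)$. A test case is a full assignment $A$ giving each $p$ a value in $d(p)$ such that $\varphi$ is true when each atom $(p=v)$ is read as true iff $A(p)=v$; it is assumed that at least one test case exists. Fix a strength $t$ with $1\le t\le|P|$. A $t$-tuple is an assignment of values to exactly $t$ distinct parameters, viewed as a set of pairs $(p,v)$; a test case covers $\tau$ if it assigns $v$ to $p$ for every $(p,v)\in\tau$. A $t$-tuple is allowed if some test case covers it; $\mathcal T_a$ is the set of allowed $t$-tuples. A covering array $CA(N;t,S)$ is a list of $N$ test cases (repetitions allowed) covering every allowed $t$-tuple; $CAN(t,S)$ is the minimum such $N$. $T(N;t,S)$ is the maximum number of $t$-tuples covered by a list of $N$ test cases. $[N]=\{1,\dots,N\}$. A Weighted Partial MaxSAT instance consists of hard constraints and soft clauses $(c,w)$ with positive integer weights;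 its optimal cost is the minimum, over truth assignments satisfying all hard constraints, of the total weight of falsified soft clauses ($\infty$ if the hard constraints are unsatisfiable). Variables: $x_{i,p,v}$ ($i\in[N]$, $p\in P$, $v\in d(p)$), $c^i_\tau$ and $c_\tau$ ($i\in[N]$, $\tau\in\mathcal T_a$), $u_i$ ($i\in\{lb+2,\dots,N\}$). Hard constraints of $\Phi$: (X) for every $i\in[N]$, $p\in P$: exactly one of $\{x_{i,p,v}:v\in d(p)\}$ is true; (SUTX) for every $i\in[N]$: the formula obtained from $\varphi$ by replacing each atom $(p=v)$ with $x_{i,p,v}$; (CX) for every $i\in[N]$, $\tau\in\mathcal T_a$, $(p,v)\in\tau$: $c^i_\tau\rightarrow x_{i,p,v}$; (RC) for every $\tau\in\mathcal T_a$: $c_\tau\leftrightarrow\bigvee_{i\in[N]}c^i_\tau$; (BSU) for every $i\in\{lb+2,\dots,N-1\}$: $u_{i+1}\rightarrow u_i$; (CU) for every $i\in\{lb+2,\dots,N\}$, $\tau\in\mathcal T_a$: $c^i_\tau\rightarrow u_i$. Soft clauses: $(\neg u_i,1)$ for every $i\in\{lb+2,\dots,N\}$, and $(c_\tau,m+1)$ for every $\tau\in\mathcal T_a$. *)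

(* Defs.v *)
From mathcomp Require Import all_boot.
Set Implicit Arguments.
Unset Strict Implicit.
Unset Printing Implicit Defensive.

Inductive fml (A : Type) : Type :=
| FTop | FBot
| FAtom of A
| FNot of fml A
| FAnd of fml A & fml A
| FOr of fml A & fml A.
Arguments FTop {A}. Arguments FBot {A}.

Fixpoint feval (A : Type) (s : A -> bool) (f : fml A) : bool :=
  match f with
  | FTop => true | FBot => false
  | FAtom a => s a
  | FNot g => ~~ feval s g
  | FAnd g h => feval s g && feval s h
  | FOr g h => feval s g || feval s h
  end.

Fixpoint fmap (A B : Type) (r : A -> B) (f : fml A) : fml B :=
  match f with
  | FTop => FTop | FBot => FBot
  | FAtom a => FAtom (r a)
  | FNot g => FNot (fmap r g)
  | FAnd g h => FAnd (fmap r g) (fmap r h)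
  | FOr g h => FOr (fmap r g) (fmap r h)
  end.

Fixpoint fatoms (A : Type) (f : fml A) : seq A :=
  match f with
  | FTop | FBot => [::]
  | FAtom a => [:: a]
  | FNot g => fatoms g
  | FAnd g h | FOr g h => fatoms g ++ fatoms h
  end.

Definition FImp (A : Type) (f g : fml A) := FOr (FNot f) g.
Definition FIff (A : Type) (f g : fml A) := FAnd (FImp f g) (FImp g f).
Definition fOrs (A : Type) (s : seq (fml A)) := foldr (@FOr A) FBot s.
Definition fAnds (A : Type) (s : seq (fml A)) := foldr (@FAnd A) FTop s.

(* "exactly one of the atoms x w, w in s" (s duplicate-free) *)
Definition fExactlyOne (W : eqType) (A : Type) (x : W -> A) (s : seq W) : fml A :=
  fOrs [seq FAnd (FAtom (x w))
                 (fAnds [seq FNot (FAtom (x w')) | w' <- s & w' != w]) | w <- s].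

Record wpmaxsat (X : Type) := WPMS {
  hard : seq (fml X);
  soft : seq (seq (X * bool) * nat)
}.

Definition lit_sat (X : Type) (a : X -> bool) (l : X * bool) := a l.1 == l.2.
Definition clause_sat (X : Type) (a : X -> bool) (c : seq (X * bool)) :=
  has (lit_sat a) c.
Definition hard_sat (X : Type) (I : wpmaxsat X) (a : X -> bool) :=
  all (feval a) (hard I).
Definition cost (X : Type) (I : wpmaxsat X) (a : X -> bool) : nat :=
  \sum_(s <- soft I | ~~ clause_sat a s.1) s.2.

(* optimal cost; None encodes infinity (hard constraints unsatisfiable) *)
Definition optimal_cost_is (X : Type) (I : wpmaxsat X) (oc : option nat) : Prop :=
  match oc with
  | None => forall a, ~~ hard_sat I a
  | Some c => (exists a, hard_sat I a /\ cost I a = c) /\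
              (forall a, hard_sat I a -> c <= cost I a)
  end.

Section SUT.
Variables (P V : finType) (d : P -> {set V}) (phi : fml (P * V)) (t : nat).

Definition is_test (A : {ffun P -> V}) : bool :=
  [forall p, A p \in d p] && feval (fun pv : P * V => A pv.1 == pv.2) phi.

Definition is_ttuple (tau : {set P * V}) : bool :=
  [&& #|tau| == t,
      [forall x in tau, x.2 \in d x.1] &
      [forall x in tau, forall y in tau, (x.1 == y.1) ==> (x == y)]].

Definition covers (A : {ffun P -> V}) (tau : {set P * V}) : bool :=
  [forall x in tau, A x.1 == x.2].

Definition allowed (tau : {set P * V}) : bool :=
  [exists A, is_test A && covers A tau].

Definition Ta : {set {set P * V}} := [set tau | is_ttuple tau && allowed tau].

Definition is_CA (n : nat) : Prop :=
  exists L : n.-tuple {ffun P -> V},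
    all is_test L /\ forall tau, tau \in Ta -> has (fun A => covers A tau) L.

Definition is_CAN (k : nat) : Prop := is_CA k /\ forall n, is_CA n -> k <= n.

Definition Tmax (n : nat) : nat :=
  \max_(L : n.-tuple {ffun P -> V} | all is_test L)
     #|[set tau | is_ttuple tau && has (fun A => covers A tau) L]|.

Inductive phivar : Type :=
| Xv of nat & P & V
| Ci of nat & {set P * V}
| Cv of {set P * V}
| Uv of nat.

Variables (N lb : nat).

Definition idxN := iota 1 N.
Definition mm := N - (lb + 1).

Definition hard_X : seq (fml phivar) :=
  flatten [seq [seq fExactlyOne (fun v => Xv i p v) (enum (d p)) | p <- enum P]
          | i <- idxN].
Definition hard_SUTX : seq (fml phivar) :=
  [seq fmap (fun pv : P * V => Xv i pv.1 pv.2) phi | i <- idxN].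
Definition hard_CX : seq (fml phivar) :=
  flatten (flatten
    [seq [seq [seq FImp (FAtom (Ci i tau)) (FAtom (Xv i pv.1 pv.2)) | pv <- enum tau]
         | tau <- enum Ta] | i <- idxN]).
Definition hard_RC : seq (fml phivar) :=
  [seq FIff (FAtom (Cv tau)) (fOrs [seq FAtom (Ci i tau) | i <- idxN])
  | tau <- enum Ta].
(* i in {lb+2, ..., N-1} *)
Definition hard_BSU : seq (fml phivar) :=
  [seq FImp (FAtom (Uv i.+1)) (FAtom (Uv i)) | i <- iota (lb + 2) (N - (lb + 2))].
(* i in {lb+2, ..., N} *)
Definition hard_CU : seq (fml phivar) :=
  flatten [seq [seq FImp (FAtom (Ci i tau)) (FAtom (Uv i)) | tau <- enum Ta]
          | i <- iota (lb + 2) mm].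

Definition soft_Phi : seq (seq (phivar * bool) * nat) :=
  [seq ([:: (Uv i, false)], 1) | i <- iota (lb + 2) mm] ++
  [seq ([:: (Cv tau, true)], mm + 1) | tau <- enum Ta].

Definition Phi : wpmaxsat phivar :=
  WPMS (hard_X ++ hard_SUTX ++ hard_CX ++ hard_RC ++ hard_BSU ++ hard_CU) soft_Phi.

End SUT.

(* Main.v *)
Require Import Defs.
From mathcomp Require Import all_boot zify.
Set Implicit Arguments. Unset Strict Implicit. Unset Printing Implicit Defensive.

Lemma feval_fOrs (A : Type) (s : A -> bool) l : feval s (fOrs l) = has (feval s) l.
Proof. by elim: l => //= f l ->. Qed.
Lemma feval_fAnds (A : Type) (s : A -> bool) l : feval s (fAnds l) = all (feval s) l.
Proof. by elim: l => //= f l ->. Qed.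
Lemma feval_fmap (A B : Type) (r : A -> B) (s : B -> bool) f :
  feval s (fmap r f) = feval (fun x => s (r x)) f.
Proof. by elim: f => //= [g -> | g -> h -> | g -> h ->]. Qed.
Lemma feval_eq_on (A : eqType) (s1 s2 : A -> bool) f :
  (forall x, x \in fatoms f -> s1 x = s2 x) -> feval s1 f = feval s2 f.
Proof.
elim: f => //= [a H| g IH H | g IHg h IHh H | g IHg h IHh H].
- by apply: H; rewrite inE.
- by rewrite IH.
- rewrite IHg ?IHh // => x Hx; apply: H; rewrite mem_cat Hx ?orbT //.
- rewrite IHg ?IHh // => x Hx; apply: H; rewrite mem_cat Hx ?orbT //.
Qed.

Lemma feval_EO_intro (W : eqType) (A : Type) (a : A -> bool) (x : W -> A) s w :
  w \in s -> a (x w) -> (forall w', w' \in s -> a (x w') -> w' = w) ->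
  feval a (fExactlyOne x s).
Proof.
move=> ws aw Hu; rewrite /fExactlyOne feval_fOrs has_map; apply/hasP; exists w => //=.
rewrite aw feval_fAnds all_map all_filter; apply/allP => w' w's /=.
apply/implyP => nw; apply/negP => aw'; by rewrite (Hu _ w's aw') eqxx in nw.
Qed.



Lemma feval_EO_elim (W : eqType) (A : Type) (a : A -> bool) (x : W -> A) s :
  feval a (fExactlyOne x s) ->
  exists w, [/\ w \in s, a (x w) & forall w', w' \in s -> a (x w') -> w' = w].
Proof.
rewrite /fExactlyOne feval_fOrs has_map => /hasP [w ws] /=; rewrite feval_fAnds all_map all_filter.
move=> /andP [aw /allP H]; exists w; split => // w' w's aw'.
apply/eqP; move: (H w' w's) => /= /implyP; case: eqP => //= _ /(_ isT).
by rewrite aw'.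
Qed.

Lemma sum_const_count (T : Type) (s : seq T) (p : pred T) c :
  \sum_(i <- s | p i) c = count p s * c.
Proof. by elim: s => [|x s IH]; rewrite ?big_nil ?big_cons //= IH; case: (p x). Qed.

Lemma count_enum (T : finType) (A : {set T}) (q : pred T) :
  count q (enum A) = #|A :&: [set x | q x]|.
Proof.
rewrite cardE -size_filter (perm_size (enum_setI _ _)); congr size.
by apply: eq_filter => x; rewrite inE.
Qed.

Lemma count_le_iota (K a n : nat) : a <= K.+1 -> K.+1 <= a + n ->
  count (fun i => i <= K) (iota a n) = K.+1 - a.
Proof.
move=> h1 h2; have -> : n = (K.+1 - a) + (n - (K.+1 - a)) by lia.
rewrite iotaD count_cat.
have -> : count (fun i => i <= K) (iota a (K.+1 - a)) = K.+1 - a.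
  rewrite -[RHS](size_iota a) ; apply/eqP; rewrite -all_count; apply/allP => i.
  rewrite mem_iota; lia.
have -> : count (fun i => i <= K) (iota (a + (K.+1 - a)) (n - (K.+1 - a))) = 0.
  apply/eqP; rewrite -leqn0 leqNgt -has_count; apply/hasP => -[i]; rewrite mem_iota; lia.
by rewrite addn0.
Qed.

Lemma count_neg (T : Type) (q : pred T) s : count (fun x => ~~ q x) s = size s - count q s.
Proof. by rewrite -(count_predC q s) addKn. Qed.

Lemma all_flatten (T : Type) (p : pred T) ss : all p (flatten ss) = all (all p) ss.
Proof. by elim: ss => //= s ss IH; rewrite all_cat IH. Qed.

Section Main.
Variables (P V : finType) (d : P -> {set V}) (phi : fml (P * V)) (t N lb CAN : nat).
Variable A0 : {ffun P -> V}.
Hypothesis HA0 : is_test d phi A0.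
Hypothesis Hatoms : forall pv, pv \in fatoms phi -> pv.2 \in d pv.1.
Hypothesis HCAN : is_CAN d phi t CAN.
Hypothesis Hlb : lb < CAN.
Hypothesis HlbN : lb + 1 <= N.

Local Notation TA := (Ta d phi t).
Local Notation m := (mm N lb).
Local Notation test := (is_test d phi).
Local Notation Cov L := [set tau | is_ttuple d t tau && has (fun A => covers A tau) L].

Lemma cost_Phi (a : phivar P V -> bool) : cost (Phi d phi t N lb) a =
  count (fun i => a (Uv P V i)) (iota (lb+2) m) + count (fun tau => ~~ a (Cv tau)) (enum TA) * (m+1).
Proof.
rewrite /cost /= /soft_Phi big_cat !big_map /= !sum_const_count muln1.
idtac.
rewrite /lit_sat /=; f_equal; [|f_equal]; apply: eq_count => x /=; by case: (a _).
Qed.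

Lemma hard_satE a : hard_sat (Phi d phi t N lb) a =
  [&& all (feval a) (hard_X d N), all (feval a) (hard_SUTX phi N), all (feval a) (hard_CX d phi t N),
      all (feval a) (hard_RC d phi t N), all (feval a) (hard_BSU P V N lb) & all (feval a) (hard_CU d phi t N lb)].
Proof. by rewrite /hard_sat /= !all_cat. Qed.

Lemma covTa L : all test L -> Cov L \subset TA.
Proof.
move=> HL; apply/subsetP => tau; rewrite !inE => /andP [-> /hasP [A AL cA]] /=.
by apply/existsP; exists A; rewrite cA (allP HL).
Qed.

Lemma Tmax_le_Ta : Tmax d phi t N <= #|TA|.
Proof. by apply/bigmax_leqP => L HL; apply: subset_leq_card; apply: covTa. Qed.

Lemma cov_le_Tmax L : all test L -> size L <= N -> #|Cov L| <= Tmax d phi t N.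
Proof.
move=> HL sL.
have sz : size (L ++ nseq (N - size L) A0) == N by rewrite size_cat size_nseq; apply/eqP; lia.
have HT : all test (Tuple sz) by rewrite /= all_cat HL /= all_nseq HA0 orbT.
have HB := @leq_bigmax_cond _ (fun L : N.-tuple {ffun P -> V} => all test L) (fun L => #|Cov L|) (Tuple sz) HT.
apply: leq_trans HB.
apply: subset_leq_card; apply/subsetP => tau; rewrite !inE /= has_cat.
by case/andP => -> ->.
Qed.

Lemma CA_of_seq L : all test L -> (forall tau, tau \in TA -> has (fun A => covers A tau) L) ->
  CAN <= size L.
Proof. move=> HL Hc; apply: HCAN.2; by exists (in_tuple L). Qed.

Lemma Tmax_eq (hC : CAN <= N) : Tmax d phi t N = #|TA|.
Proof.
apply/eqP; rewrite eqn_leq Tmax_le_Ta /=.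
case: HCAN.1 => Lc [HLc Hc].
apply: leq_trans (cov_le_Tmax HLc _); last by rewrite size_tuple.
apply: subset_leq_card; apply/subsetP => tau taui; rewrite inE Hc // andbT.
by move: taui; rewrite inE => /andP [].
Qed.

Definition target := (if CAN <= N then CAN - (lb + 1) else N - (lb + 1))
           + (#|TA| - Tmax d phi t N) * (m + 1).

Lemma core K L (C : {set {set P * V}}) : lb + 1 <= K <= N -> size L = K -> all test L ->
  C \subset TA -> (forall tau, tau \in C -> has (fun A => covers A tau) L) ->
  target <= (K - (lb + 1)) + (#|TA| - #|C|) * (m + 1).
Proof.
move=> HK sL HL CT HC.
have CcovL : #|C| <= #|Cov L|.
  apply: subset_leq_card; apply/subsetP => tau tC; rewrite inE HC // andbT.
  by move: (subsetP CT _ tC); rewrite inE => /andP [].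
have covT : #|Cov L| <= Tmax d phi t N by apply: cov_le_Tmax HL _; rewrite sL; case/andP: HK.
have TT := Tmax_le_Ta.
have CTc : #|C| <= #|TA| by apply: subset_leq_card.
rewrite /target /mm; case: ifP => hC.
  rewrite Tmax_eq // subnn mul0n addn0.
  case: (ltnP #|C| #|TA|) => hc; first by nia.
  have eC : C = TA by apply/eqP; rewrite eqEcard CT hc.
  have : CAN <= size L by apply: CA_of_seq HL _ => tau tt; apply: HC; rewrite eC.
  rewrite sL; lia.
case: (ltnP #|C| (Tmax d phi t N)) => hc; first by nia.
case: (ltnP K N) => hKN; last by nia.
exfalso.
have : ~~ (TA \subset Cov L).
  apply/negP => /subsetP sub.
  have : CAN <= size L.
    by apply: CA_of_seq HL _ => tau tt; move: (sub _ tt); rewrite inE => /andP [].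
  rewrite sL; lia.
case/subsetPn => tau tT tnc.
have := tT; rewrite inE => /andP [tt /existsP [A /andP [tA cA]]].
have HL2 : all test (rcons L A) by rewrite all_rcons tA HL.
have := cov_le_Tmax HL2; rewrite size_rcons sL => /(_ hKN) H2.
have : #|tau |: Cov L| <= #|Cov (rcons L A)|.
  apply: subset_leq_card; apply/subsetP => x; rewrite !inE -cats1 has_cat /=.
  case/orP => [/eqP -> | /andP [-> ->]] //; by rewrite tt cA orbT.
rewrite cardsU1 tnc add1n => H3; have := leq_trans H3 H2; have := leq_trans hc CcovL => h1 h2; have := leq_trans h2 h1; by rewrite ltnn.
Qed.


Lemma lower a : hard_sat (Phi d phi t N lb) a -> target <= cost (Phi d phi t N lb) a.
Proof.
move=> Ha; move: (Ha); rewrite hard_satE => /and5P [hX hS hCX hRC /andP [hB hU]].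
have hX' : forall i p, 1 <= i <= N -> feval a (fExactlyOne (fun v => Xv i p v) (enum (d p))).
  move=> i p iN; have iin : i \in idxN N by clear -iN; rewrite mem_iota; lia.
  have pin : p \in enum P by rewrite mem_enum.
  by move: hX; rewrite /hard_X all_flatten all_map => /allP /(_ i iin) /=; rewrite all_map => /allP /(_ p pin).
have hS' : forall i, 1 <= i <= N -> feval a (fmap (fun pv : P * V => Xv i pv.1 pv.2) phi).
  move=> i iN; have iin : i \in idxN N by clear -iN; rewrite mem_iota; lia.
  by move: hS; rewrite /hard_SUTX all_map => /allP /(_ i iin).
have hCX' : forall i tau pv, 1 <= i <= N -> tau \in TA -> pv \in tau ->
    ~~ a (Ci i tau) || a (Xv i pv.1 pv.2).
  move=> i tau pv iN tT pvt; have iin : i \in idxN N by clear -iN; rewrite mem_iota; lia.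
  move: hCX; rewrite /hard_CX !all_flatten all_map => /allP /(_ i iin) /=.
  rewrite all_map => /allP /(_ tau); rewrite mem_enum => /(_ tT) /=.
  by rewrite all_map => /allP /(_ pv); rewrite mem_enum => /(_ pvt).
have hRC' : forall tau, tau \in TA ->
    feval a (FIff (FAtom (Cv tau)) (fOrs [seq FAtom (Ci i tau) | i <- idxN N])).
  move=> tau tT; move: hRC; rewrite /hard_RC all_map => /allP /(_ tau).
  by rewrite mem_enum => /(_ tT).
have hB' : forall i, lb + 2 <= i < N -> ~~ a (Uv P V i.+1) || a (Uv P V i).
  move=> i iN; move: hB; rewrite /hard_BSU all_map => /allP /(_ i); rewrite mem_iota.
  by apply; lia.
have hU' : forall i tau, lb + 2 <= i <= N -> tau \in TA -> ~~ a (Ci i tau) || a (Uv P V i).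
  move=> i tau iN tT; have iin : i \in iota (lb + 2) m by clear -iN; rewrite mem_iota /mm; lia.
  move: hU; rewrite /hard_CU all_flatten all_map => /allP /(_ i iin) /=.
  by rewrite all_map => /allP /(_ tau); rewrite mem_enum => /(_ tT).
clear hX hS hCX hRC hB hU Ha.
pose rowL i := [ffun p => odflt (A0 p) [pick v in d p | a (Xv i p v)]].
have rowS : forall i p, 1 <= i <= N -> rowL i p \in d p /\
    forall v, v \in d p -> a (Xv i p v) = (rowL i p == v).
  move=> i p iN.
  case/feval_EO_elim: (hX' i p iN) => w [wd aw wu]; rewrite mem_enum in wd.
  have -> : rowL i p = w.
    rewrite ffunE; case: pickP => [v /andP [vd av] | none] /=.
    - by apply: wu; rewrite ?mem_enum.
    - by move: (none w); rewrite wd aw.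
  split => // v vd; apply/idP/eqP => [av | <-//]; apply/esym/wu; rewrite ?mem_enum //.
have rowT : forall i, 1 <= i <= N -> test (rowL i).
  move=> i iN; apply/andP; split; first by apply/forallP => p; case: (rowS i p iN).
  have := hS' i iN.
  rewrite feval_fmap => H.
  suff <- : feval (fun x => a (Xv i x.1 x.2)) phi = feval (fun pv => rowL i pv.1 == pv.2) phi by [].
  apply: feval_eq_on => pv pva /=.
  by case: (rowS i pv.1 iN) => _ ->; [ | exact: Hatoms].
have Udown : forall i i', lb + 2 <= i' -> i' <= i -> i <= N -> a (Uv P V i) -> a (Uv P V i').
  move=> i i' h1 h2 hN ai.
  have : forall k i', i' + k = i -> lb + 2 <= i' -> a (Uv P V i').
    elim => [|k IH] i'' e h; first by rewrite addn0 in e; rewrite e.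
    have Hn : a (Uv P V i''.+1) by apply: IH; lia.
    by have := hB' i''; rewrite Hn /=; apply; lia.
  by move/(_ (i - i') i' (subnKC h2) h1).
have jm : count (fun i => a (Uv P V i)) (iota (lb+2) m) <= m.
  by rewrite -[X in _ <= X](size_iota (lb+2)); apply: count_size.
move: jm; move jdef: (count (fun i => a (Uv P V i)) (iota (lb+2) m)) => j jm.
move Kdef: (lb + 1 + j) => K.
have iK : forall i, 1 <= i <= N -> (lb + 2 <= i -> a (Uv P V i)) -> i <= K.
  move=> i iN Hu; case: (leqP i (lb+1)) => h; first lia.
  have ai : a (Uv P V i) by apply: Hu; lia.
  have : i - (lb+1) <= j.
    have eN : N - (lb+1) = (i - (lb+1)) + (N - i) by clear -iN h; lia.
    rewrite -jdef /mm eN.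
    rewrite iotaD count_cat; apply: leq_trans (leq_addr _ _).
    have -> : count (fun i => a (Uv P V i)) (iota (lb+2) (i - (lb+1))) = i - (lb+1).
      rewrite -[RHS](size_iota (lb+2)); apply/eqP; rewrite -all_count; apply/allP => i'.
      rewrite mem_iota => hi'; apply: (Udown i) => //; lia.
    done.
  lia.
have covC : forall tau, tau \in TA -> a (Cv tau) ->
    has (fun A => covers A tau) [seq rowL i | i <- iota 1 K].
  move=> tau tT aC.
  move: (hRC' tau tT); rewrite /= feval_fOrs has_map aC /= orbT andbT => /hasP [i iN /= ai].
  rewrite mem_iota in iN.
  have iN' : 1 <= i <= N by lia.
  have cov : covers (rowL i) tau.
    apply/forall_inP => pv pvt.
    move: (hCX' i tau pv iN' tT pvt); rewrite ai /=.
    move: tT; rewrite inE => /andP [/and3P [_ /forall_inP Hd _] _].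
    by case: (rowS i pv.1 iN') => _ <-; [ | exact: Hd].
  have iKK : i <= K.
    apply: iK => // h.
    by move: (hU' i tau); rewrite ai /=; apply => //; lia.
  by apply/hasP; exists (rowL i) => //; apply: map_f; rewrite mem_iota; lia.
have H := @core K [seq rowL i | i <- iota 1 K] (TA :&: [set tau | a (Cv tau)]).
rewrite cost_Phi count_neg count_enum -cardE jdef.
have -> : j = K - (lb + 1) by lia.
apply: H.
- by rewrite /mm in jm *; lia.
- by rewrite size_map size_iota.
- by apply/allP => A /mapP [i ii ->]; apply: rowT; rewrite mem_iota in ii; rewrite /mm in jm ii *; lia.
- exact: subsetIl.
- by move=> tau /setIP [tT]; rewrite inE => aC; apply: covC.
Qed.

Definition asg (row : nat -> {ffun P -> V}) (K : nat) (x : phivar P V) : bool :=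
  match x with
  | Xv i p v => row i p == v
  | Ci i tau => (0 < i <= K) && covers (row i) tau
  | Cv tau => has (fun i => (0 < i <= K) && covers (row i) tau) (iota 1 N)
  | Uv i => i <= K
  end.

Lemma iff_refl_b (b1 b2 : bool) : b1 = b2 -> (~~ b1 || b2) && (~~ b2 || b1).
Proof. by move=> ->; case: b2. Qed.

Lemma asg_hard row K : (forall i, test (row i)) -> hard_sat (Phi d phi t N lb) (asg row K).
Proof.
move=> Hr; rewrite hard_satE; apply/and5P; split; last apply/andP; last split.
- rewrite /hard_X all_flatten all_map; apply/allP => i _ /=; rewrite all_map; apply/allP => p _ /=.
  apply: (@feval_EO_intro _ _ _ _ _ (row i p)) => /=.
  + by rewrite mem_enum; case/andP: (Hr i) => /forallP.
  + exact: eqxx.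
  + by move=> w' _ /eqP ->.
- rewrite /hard_SUTX all_map; apply/allP => i _ /=; rewrite feval_fmap /=.
  by case/andP: (Hr i).
- rewrite /hard_CX !all_flatten all_map; apply/allP => i _ /=; rewrite all_map; apply/allP => tau _ /=.
  rewrite all_map; apply/allP => pv pvt /=; rewrite mem_enum in pvt.
  rewrite -implybE; apply/implyP => /andP [_ /forall_inP H]; exact: H.
- rewrite /hard_RC all_map; apply/allP => tau _ /=; rewrite feval_fOrs has_map /=.
  by apply: iff_refl_b.
- rewrite /hard_BSU all_map; apply/allP => i _ /=.
  by rewrite -implybE; apply/implyP => /ltnW.
- rewrite /hard_CU all_flatten all_map; apply/allP => i _ /=; rewrite all_map; apply/allP => tau _ /=.
  by rewrite -implybE; apply/implyP => /andP [/andP [_ ->]].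
Qed.

Lemma nth_test L i : all test L -> test (nth A0 L i).
Proof.
move=> HL; case: (ltnP i (size L)) => h; first by apply: (allP HL); exact: mem_nth.
by rewrite nth_default.
Qed.

Lemma upper : exists a, hard_sat (Phi d phi t N lb) a /\ cost (Phi d phi t N lb) a = target.
Proof.
case: (leqP CAN N) => hC.
- case: HCAN.1 => Lc [HLc Hc].
  exists (asg (fun i => nth A0 Lc i.-1) CAN); split.
    by apply: asg_hard => i; exact: nth_test.
  rewrite cost_Phi /= count_le_iota; last (by rewrite /mm; lia); last by lia.
  rewrite (eq_in_count (a2 := pred0)) ?count_pred0; last first.
    move=> tau; rewrite mem_enum => tT /=; apply/negbTE; rewrite negbK.
    have /hasP [A AL cA] := Hc tau tT.
    have hi : index A Lc < CAN by rewrite -{2}(size_tuple Lc) index_mem.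
    apply/hasP; exists (index A Lc).+1; first by rewrite mem_iota; lia.
    by rewrite /= nth_index // cA hi.
  rewrite /target hC Tmax_eq // subnn !mul0n; lia.
- have : 0 < #|[pred L : N.-tuple {ffun P -> V} | all test L]|.
    apply/card_gt0P; exists (nseq_tuple N A0); by rewrite inE /= all_nseq HA0 orbT.
  case/(eq_bigmax_cond (fun L : N.-tuple {ffun P -> V} => #|Cov L|)) => L0 L0in HL0.
  have HT : Tmax d phi t N = #|Cov L0| by exact: HL0.
  have HL0t : all test L0 := L0in.
  exists (asg (fun i => nth A0 L0 i.-1) N); split.
    by apply: asg_hard => i; exact: nth_test.
  rewrite cost_Phi /= count_le_iota; last (by rewrite /mm; lia); last by lia.
  rewrite count_neg count_enum -cardE.
  have -> : TA :&: [set x | has (fun i => (0 < i <= N) && covers (nth A0 L0 i.-1) x) (iota 1 N)] = Cov L0.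
    apply/setP => tau; rewrite !inE.
    have -> : has (fun i => (0 < i <= N) && covers (nth A0 L0 i.-1) tau) (iota 1 N) =
              has (fun A => covers A tau) L0.
      rewrite -{2}(mkseq_nth A0 L0) size_tuple /mkseq has_map -[iota 1 N]/(iota (1 + 0) N) iotaDl has_map.
      apply: eq_in_has => i; rewrite mem_iota /= => hi; rewrite add1n /=.
      by have -> : i < N by lia.
    case tt: (is_ttuple d t tau); case h: (has _ _); rewrite ?andbF ?andbT //=.
    by have := subsetP (covTa HL0t) tau; rewrite !inE tt h /= => /(_ isT). 
  rewrite /target leqNgt hC /= HT; have -> : N.+1 - (lb + 2) = N - (lb + 1) by lia.
  done.
Qed.

End Main.

Theorem proposition11 (P V : finType) (d : P -> {set V}) (phi : fml (P * V))
    (t N lb CAN : nat)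
    (Hdom : forall p, d p != set0)
    (Hatoms : forall pv, pv \in fatoms phi -> pv.2 \in d pv.1)
    (Htest : exists A, is_test d phi A)
    (Ht : 1 <= t <= #|P|)
    (HCAN : is_CAN d phi t CAN)
    (HN : 1 <= N) (Hlb : lb < CAN) (HlbN : lb + 1 <= N) :
  optimal_cost_is (Phi d phi t N lb)
    (Some ((if CAN <= N then CAN - (lb + 1) else N - (lb + 1))
           + (#|Ta d phi t| - Tmax d phi t N) * (mm N lb + 1))).
Proof.
case: Htest => A0 HA0; split.
- have [a [Ha Hc]] := upper HA0 HCAN Hlb HlbN.
  by exists a; split.
- by move=> a Ha; exact: (lower HA0 Hatoms HCAN Hlb HlbN Ha).
Qed.
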